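(* Consider the setting described in the context, where only the dissipative part of the numerical flux is kept, i.e. the numerical flux is $\Phi_{i+1/2}=-\tfrac12 D_{i+1/2}(u_R-u_L)_{i+1/2}$ (equivalently $f_L=f_R=0$). Let $\mathcal{E}_j=(\Phi_{j+1/2}-\Phi_{j-1/2})/h$. Then, as $h\to 0$ with all derivatives evaluated at $x_j$: (i) if $\kappa_3=\kappa-1$, $$\mathcal{E}_j=\frac{\kappa-1}{32}\left[\frac{\partial D}{\partial x}\frac{\partial^5 u}{\partial x^5}+D(u(x_j))\frac{\partial^6 u}{\partial x^6}\right]h^5+O(h^7);$$ (ii) if $\kappa_3=0$, $$\mathcal{E}_j=-\frac{\kappa-1}{8}\left[\frac{\partial D}{\partial x}\frac{\partial^3 u}{\partial x^3}+D(u(x_j))\frac{\partial^4 u}{\partial x^4}\right]h^3+O(h^5).$$ Here $\partial D/\partial x$ denotes $\frac{d}{dx}D(u(x))$.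
   Context: Let $h>0$ and consider the uniform one-dimensional grid $x_i=ih$, $i\in\mathbb{Z}$. Let $u$ be a smooth ($C^\infty$) real function of $x$ and $u_i=u(x_i)$. Let $D$ be a smooth real function of one variable (dissipation coefficient). Nodal derivative approximations are obtained by successive central differencing: $(u_x)_i=(u_{i+1}-u_{i-1})/(2h)$ and $(u_{xx})_i=((u_x)_{i+1}-(u_x)_{i-1})/(2h)$. At the face $i+1/2$, with $j=i$, $k=i+1$, and parameters $\kappa,\kappa_3\in\mathbb{R}$, the reconstructed states are $u_L=\kappa\frac{u_j+u_k}{2}+(1-\kappa)\left[u_j+\frac h2(u_x)_j\right]+\kappa_3T_j$, $u_R=\kappa\frac{u_j+u_k}{2}+(1-\kappa)\left[u_k-\frac h2(u_x)_k\right]+\kappa_3T_k$, where $T_j=\frac h4\big((u_x)_k-(u_x)_j\big)-\frac{h^2}{4}(u_{xx})_j$ and $T_k=\frac h4\big((u_x)_k-(u_x)_j\big)-\frac{h^2}{4}(u_{xx})_k$; these are denoted $(u_L)_{i+1/2},(u_R)_{i+1/2}$. The face dissipation coefficient is $D_{i+1/2}=\bar D(u_i,u_{i+1})$, where $\bar D$ is a smooth symmetric function of two variables with $\bar D(v,v)=D(v)$ (e.g. $D$ evaluated at an average state). *)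

(* Defs.v *)
From Stdlib Require Import Reals ZArith List.
From Coquelicot Require Import Coquelicot.
Open Scope R_scope.

Definition smooth1 (f : R -> R) : Prop :=
  forall (n : nat) (x : R), ex_derive_n f n x.

(** Iterated partial derivatives of a function of two real variables;
    [true] = differentiate in the first variable, [false] = in the second.
    The head of the list is the last derivative taken. *)
Fixpoint pderiv (l : list bool) (f : R -> R -> R) : R -> R -> R :=
  match l with
  | nil => f
  | true :: l' => fun a b => Derive (fun t => pderiv l' f t b) a
  | false :: l' => fun a b => Derive (fun t => pderiv l' f a t) b
  end.

Definition smooth2 (f : R -> R -> R) : Prop :=
  forall (l : list bool) (a b : R),
    ex_derive (fun t => pderiv l f t b) a /\
    ex_derive (fun t => pderiv l f a t) b /\
    continuity_2d_pt (pderiv l f) a b.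

Definition ux (U : Z -> R) (h : R) (i : Z) : R :=
  (U (i + 1)%Z - U (i - 1)%Z) / (2 * h).

Definition uxx (U : Z -> R) (h : R) (i : Z) : R :=
  (ux U h (i + 1)%Z - ux U h (i - 1)%Z) / (2 * h).

(** Correction terms T_j and T_k at face i+1/2 (j = i, k = i+1). *)
Definition Tj (U : Z -> R) (h : R) (i : Z) : R :=
  h / 4 * (ux U h (i + 1)%Z - ux U h i) - h ^ 2 / 4 * uxx U h i.

Definition Tk (U : Z -> R) (h : R) (i : Z) : R :=
  h / 4 * (ux U h (i + 1)%Z - ux U h i) - h ^ 2 / 4 * uxx U h (i + 1)%Z.

(** Reconstructed states (u_L)_{i+1/2}, (u_R)_{i+1/2}. *)
Definition uL (kappa kappa3 : R) (U : Z -> R) (h : R) (i : Z) : R :=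
  kappa * (U i + U (i + 1)%Z) / 2
  + (1 - kappa) * (U i + h / 2 * ux U h i)
  + kappa3 * Tj U h i.

Definition uR (kappa kappa3 : R) (U : Z -> R) (h : R) (i : Z) : R :=
  kappa * (U i + U (i + 1)%Z) / 2
  + (1 - kappa) * (U (i + 1)%Z - h / 2 * ux U h (i + 1)%Z)
  + kappa3 * Tk U h i.

Definition Phi (Dbar : R -> R -> R) (kappa kappa3 : R) (U : Z -> R) (h : R)
    (i : Z) : R :=
  - / 2 * Dbar (U i) (U (i + 1)%Z) * (uR kappa kappa3 U h i - uL kappa kappa3 U h i).

Definition Eerr (Dbar : R -> R -> R) (kappa kappa3 : R) (U : Z -> R) (h : R)
    (j : Z) : R :=
  (Phi Dbar kappa kappa3 U h j - Phi Dbar kappa kappa3 U h (j - 1)%Z) / h.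

Definition gridvals (u : R -> R) (x h : R) (j : Z) : Z -> R :=
  fun i => u (x + IZR (i - j) * h).

(* Main.v *)
Require Import Defs.
From Stdlib Require Import Reals ZArith Lra Lia Psatz.
From Coquelicot Require Import Coquelicot.
Open Scope R_scope.

Definition O_ (n : nat) (f : R -> R) : Prop :=
  exists C d : R, 0 < d /\ forall h : R, 0 < h < d -> Rabs (f h) <= C * h ^ n.

Lemma O_ext n f g : (forall h, 0 < h -> f h = g h) -> O_ n f -> O_ n g.
Proof.
  intros E [C [d [Hd H]]]. exists C, d; split; auto.
  intros h Hh. rewrite <- E by lra. auto.
Qed.

Lemma O_add n f g : O_ n f -> O_ n g -> O_ n (fun h => f h + g h).
Proof.
  intros [C1 [d1 [Hd1 H1]]] [C2 [d2 [Hd2 H2]]].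
  exists (C1 + C2), (Rmin d1 d2); split. apply Rmin_pos; auto.
  intros h Hh. assert (h < d1) by (eapply Rlt_le_trans; [apply Hh|apply Rmin_l]).
  assert (h < d2) by (eapply Rlt_le_trans; [apply Hh|apply Rmin_r]).
  eapply Rle_trans. apply Rabs_triang.
  specialize (H1 h ltac:(lra)); specialize (H2 h ltac:(lra)). lra.
Qed.

Lemma O_scal n c f : O_ n f -> O_ n (fun h => c * f h).
Proof.
  intros [C [d [Hd H]]]. exists (Rabs c * C), d; split; auto.
  intros h Hh. rewrite Rabs_mult. rewrite Rmult_assoc.
  apply Rmult_le_compat_l. apply Rabs_pos. auto.
Qed.

Lemma O_mul n m f g : O_ n f -> O_ m g -> O_ (n + m) (fun h => f h * g h).
Proof.
  intros [C1 [d1 [Hd1 H1]]] [C2 [d2 [Hd2 H2]]].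
  exists (C1 * C2), (Rmin d1 d2); split. apply Rmin_pos; auto.
  intros h Hh. assert (h < d1) by (eapply Rlt_le_trans; [apply Hh|apply Rmin_l]).
  assert (h < d2) by (eapply Rlt_le_trans; [apply Hh|apply Rmin_r]).
  specialize (H1 h ltac:(lra)); specialize (H2 h ltac:(lra)).
  rewrite Rabs_mult, pow_add.
  replace (C1 * C2 * (h ^ n * h ^ m)) with ((C1 * h ^ n) * (C2 * h ^ m)) by ring.
  apply Rmult_le_compat; auto; apply Rabs_pos.
Qed.

Lemma O_weak n m f : (m <= n)%nat -> O_ n f -> O_ m f.
Proof.
  intros Hmn [C [d [Hd H]]]. exists (Rabs C), (Rmin d 1); split.
  apply Rmin_pos; lra.
  intros h Hh. assert (h < d) by (eapply Rlt_le_trans; [apply Hh|apply Rmin_l]).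
  assert (h < 1) by (eapply Rlt_le_trans; [apply Hh|apply Rmin_r]).
  eapply Rle_trans. apply H; lra.
  replace n with (m + (n - m))%nat by lia. rewrite pow_add.
  assert (0 <= h ^ m) by (apply pow_le; lra).
  assert (0 <= h ^ (n - m) <= 1).
  { split. apply pow_le; lra. rewrite <- (pow1 (n - m)). apply pow_incr; lra. }
  assert (C <= Rabs C) by apply Rle_abs. assert (0 <= Rabs C) by apply Rabs_pos.
  set (a := h ^ m) in *. set (b := h ^ (n - m)) in *.
  apply Rle_trans with (Rabs C * (a * b)). apply Rmult_le_compat_r; nra.
  assert (a * b <= a) by nra. nra.
Qed.

Lemma O_pow n c : O_ n (fun h => c * h ^ n).
Proof.
  exists (Rabs c), 1; split; [lra|]. intros h Hh.
  rewrite Rabs_mult. rewrite (Rabs_right (h ^ n)). lra. apply Rle_ge, pow_le; lra.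
Qed.

Lemma O_div n f : O_ (S n) f -> O_ n (fun h => f h / h).
Proof.
  intros [C [d [Hd H]]]. exists C, d; split; auto. intros h Hh.
  unfold Rdiv. rewrite Rabs_mult, Rabs_inv, (Rabs_right h) by lra.
  specialize (H h Hh). simpl in H.
  apply (Rmult_le_reg_r h); [lra|]. rewrite Rmult_assoc, Rinv_l by lra. lra.
Qed.


Lemma cont_bound (g : R -> R) (x : R) : continuous g x ->
  exists d, 0 < d /\ forall z, Rabs (z - x) < d -> Rabs (g z) <= Rabs (g x) + 1.
Proof.
  intros Hc. assert (Hp : continuity_pt g x) by (apply continuity_pt_filterlim; exact Hc).
  destruct (Hp 1 Rlt_0_1) as [alp [Ha Hb]]. exists alp; split; auto.
  intros z Hz. destruct (Req_dec z x) as [->|Hne]. lra.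
  assert (Hd : Rabs (g z - g x) < 1).
  { apply (Hb z). split. split. exact I. auto. exact Hz. }
  pose proof (Rabs_triang (g z - g x) (g x)). replace (g z - g x + g x) with (g z) in H by ring. lra.
Qed.

Lemma sum_at0 f x N : sum_f_R0 (fun m => 0 ^ m / INR (fact m) * Derive_n f m x) N = f x.
Proof.
  induction N. simpl. field. simpl sum_f_R0. rewrite IHN. simpl pow. rewrite Rmult_0_l. unfold Rdiv. ring.
Qed.

Lemma taylor_local f x N : (forall n t, ex_derive_n f n t) ->
  exists M d, 0 < d /\ forall t, Rabs t < d ->
    Rabs (f (x + t) - sum_f_R0 (fun m => t ^ m / INR (fact m) * Derive_n f m x) N)
      <= M * Rabs t ^ (S N).
Proof.
  intros Hs.
  set (g := Derive_n f (S N)).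
  assert (Hc : continuous g x).
  { apply (@ex_derive_continuous R_AbsRing R_NormedModule). exact (Hs (S (S N)) x). }
  destruct (cont_bound g x Hc) as [d [Hd Hb]].
  set (F := INR (fact (S N))). assert (HF : 0 < F) by apply INR_fact_lt_0.
  exists ((Rabs (g x) + 1) / F), d; split; auto.
  intros t Ht.
  destruct (total_order_T t 0) as [[Hneg|H0]|Hpos].
  - set (f' := fun y => f (- y)).
    assert (Hs' : forall k y, ex_derive_n f' k y).
    { intros k y. apply ex_derive_n_comp_opp. apply filter_forall. intros; auto. }
    destruct (Taylor_Lagrange f' N (- x) (- x - t)) as [z [Hz E]]. lra.
    { intros; auto. }
    unfold f' at 1 in E. replace (- (- x - t)) with (x + t) in E by ring.
    rewrite E. clear E.
    assert (Esum : sum_f_R0 (fun m => (- x - t - - x) ^ m / INR (fact m) * Derive_n f' m (- x)) N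
                 = sum_f_R0 (fun m => t ^ m / INR (fact m) * Derive_n f m x) N).
    { apply sum_eq. intros m _. unfold f'. rewrite Derive_n_comp_opp.
      2:{ apply filter_forall. intros; auto. }
      rewrite Ropp_involutive. replace (- x - t - - x) with (-1 * t) by ring.
      rewrite Rpow_mult_distr.
      assert (E1 : (-1) ^ m * (-1) ^ m = 1).
      { rewrite <- Rpow_mult_distr. replace (-1 * -1) with 1 by ring. apply pow1. }
      transitivity (((-1) ^ m * (-1) ^ m) * (t ^ m / INR (fact m) * Derive_n f m x)).
      unfold Rdiv; ring. rewrite E1; ring. }
    rewrite Esum.
    unfold f'. rewrite Derive_n_comp_opp. 2:{ apply filter_forall. intros; auto. }
    fold g. replace (- x - t - - x) with (-1 * t) by ring.
    match goal with |- Rabs (?S + ?r - ?S) <= _ => replace (S + r - S) with r by ring end.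
    rewrite !Rabs_mult. unfold Rdiv. rewrite Rabs_mult. fold F.
    rewrite Rpow_mult_distr, Rabs_mult, !pow_1_abs, <- RPow_abs.
    rewrite (Rabs_right (/ F)) by (apply Rle_ge, Rlt_le, Rinv_0_lt_compat; lra).
    assert (Hgz : Rabs (g (- z)) <= Rabs (g x) + 1).
    { apply Hb. rewrite Rabs_left in Ht by lra. rewrite Rabs_left by lra. lra. }
    assert (0 <= Rabs t ^ S N) by (apply pow_le, Rabs_pos).
    assert (0 < / F) by (apply Rinv_0_lt_compat; lra).
    apply Rle_trans with ((Rabs t ^ S N * / F) * (Rabs (g x) + 1)); [| right; ring].
    replace (1 * Rabs t ^ S N * / F * (1 * Rabs (g (- z)))) with
      ((Rabs t ^ S N * / F) * Rabs (g (- z))) by ring.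
    apply Rmult_le_compat_l; [nra|auto].
  - subst t. rewrite Rplus_0_r, sum_at0. rewrite Rminus_diag, Rabs_R0.
    simpl. lra.
  - destruct (Taylor_Lagrange f N x (x + t)) as [z [Hz E]]. lra.
    { intros; auto. }
    rewrite E. clear E. replace (x + t - x) with t by ring. fold g.
    match goal with |- Rabs (?S + ?r - ?S) <= _ => replace (S + r - S) with r by ring end.
    rewrite !Rabs_mult. unfold Rdiv. rewrite Rabs_mult. fold F.
    rewrite <- !RPow_abs.
    rewrite (Rabs_right (/ F)) by (apply Rle_ge, Rlt_le, Rinv_0_lt_compat; lra).
    assert (Hgz : Rabs (g z) <= Rabs (g x) + 1).
    { apply Hb. rewrite Rabs_right in Ht by lra. rewrite Rabs_right by lra. lra. }
    assert (0 <= Rabs t ^ S N) by (apply pow_le, Rabs_pos).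
    assert (0 < / F) by (apply Rinv_0_lt_compat; lra).
    replace ((Rabs (g x) + 1) * / F * Rabs t ^ S N) with
      ((Rabs t ^ S N * / F) * (Rabs (g x) + 1)) by ring.
    apply Rmult_le_compat_l; [nra|auto].
Qed.
Definition Tp (f : R -> R) (x : R) (N : nat) (t : R) :=
  sum_f_R0 (fun m => t ^ m / INR (fact m) * Derive_n f m x) N.

Lemma Tp2 f x t : Tp f x 2 t = f x + t * Derive_n f 1 x + t ^ 2 / 2 * Derive_n f 2 x.
Proof. unfold Tp. cbn [sum_f_R0]. rewrite !INR_IZR_INZ. simpl Z.of_nat. simpl Derive_n at 1. field. Qed.

Lemma Tp7 f x t : Tp f x 7 t = f x + t * Derive_n f 1 x + t ^ 2 / 2 * Derive_n f 2 x
  + t ^ 3 / 6 * Derive_n f 3 x + t ^ 4 / 24 * Derive_n f 4 x + t ^ 5 / 120 * Derive_n f 5 x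
  + t ^ 6 / 720 * Derive_n f 6 x + t ^ 7 / 5040 * Derive_n f 7 x.
Proof. unfold Tp. cbn [sum_f_R0]. rewrite !INR_IZR_INZ. simpl Z.of_nat. simpl Derive_n at 1. field. Qed.

Lemma taylor_O f x N m : (forall n t, ex_derive_n f n t) ->
  O_ (S N) (fun h => f (x + m * h) - Tp f x N (m * h)).
Proof.
  intros Hs. destruct (taylor_local f x N Hs) as [M [d [Hd H]]].
  assert (Hm : 0 < Rabs m + 1) by (pose proof (Rabs_pos m); lra).
  exists (M * Rabs m ^ S N), (d / (Rabs m + 1)); split.
  apply Rdiv_lt_0_compat; lra.
  intros h Hh. eapply Rle_trans. apply H.
  - rewrite Rabs_mult, (Rabs_right h) by lra.
    assert (h * (Rabs m + 1) < d).
    { destruct Hh as [_ Hh]. apply (Rmult_lt_compat_r (Rabs m + 1)) in Hh; auto.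
      unfold Rdiv in Hh. rewrite Rmult_assoc, Rinv_l in Hh by lra. lra. }
    pose proof (Rabs_pos m). nra.
  - right. unfold Tp. rewrite Rabs_mult, (Rabs_right h) by lra.
    rewrite Rpow_mult_distr. ring.
Qed.

Lemma O_comp (G : R -> R) N (d : R -> R) :
  (exists M e, 0 < e /\ forall y, Rabs y < e -> Rabs (G y) <= M * Rabs y ^ N) ->
  O_ 1 d -> O_ N (fun h => G (d h)).
Proof.
  intros [M [e [He HG]]] [C [dl [Hdl Hd]]].
  set (C' := Rabs C + 1). assert (HC' : 0 < C') by (unfold C'; pose proof (Rabs_pos C); lra).
  exists (Rabs M * C' ^ N), (Rmin dl (e / C')); split.
  apply Rmin_pos; auto. apply Rdiv_lt_0_compat; lra.
  intros h Hh. assert (h < dl) by (eapply Rlt_le_trans; [apply Hh|apply Rmin_l]).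
  assert (h < e / C') by (eapply Rlt_le_trans; [apply Hh|apply Rmin_r]).
  specialize (Hd h ltac:(lra)). rewrite pow_1 in Hd.
  assert (Hb : Rabs (d h) <= C' * h).
  { unfold C'. pose proof (Rle_abs C). nra. }
  assert (C' * h < e).
  { apply (Rmult_lt_compat_l C') in H0; auto. unfold Rdiv in H0.
    rewrite <- Rmult_assoc, (Rmult_comm C' e), Rmult_assoc, Rinv_r in H0 by lra. lra. }
  eapply Rle_trans. apply HG. lra.
  apply Rle_trans with (Rabs M * Rabs (d h) ^ N).
  apply Rmult_le_compat_r. apply pow_le, Rabs_pos. apply Rle_abs.
  rewrite Rmult_assoc, <- Rpow_mult_distr. apply Rmult_le_compat_l. apply Rabs_pos.
  apply pow_incr. split. apply Rabs_pos. auto.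
Qed.

Lemma gv (u : R -> R) x h j e m : (e - j)%Z = m -> gridvals u x h j e = u (x + IZR m * h).
Proof. intros <-. reflexivity. Qed.

Ltac gvs := repeat match goal with |- context [gridvals ?u ?x ?h ?j ?e] =>
  first [ rewrite (gv u x h j e 0) by ring | rewrite (gv u x h j e 1) by ring
        | rewrite (gv u x h j e (-1)) by ring | rewrite (gv u x h j e 2) by ring
        | rewrite (gv u x h j e (-2)) by ring | rewrite (gv u x h j e 3) by ring
        | rewrite (gv u x h j e (-3)) by ring ] end.

Lemma smoothF (Dbar : R -> R -> R) c : smooth2 Dbar -> forall n t, ex_derive_n (fun y => Dbar c y) n t.
Proof.
  intros HS.
  assert (E : forall n y, Derive_n (fun y => Dbar c y) n y = pderiv (List.repeat false n) Dbar c y).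
  { induction n; intros y. reflexivity. simpl. apply Derive_ext. intros t. apply IHn. }
  intros [|n] t. exact I. simpl.
  apply (ex_derive_ext (fun y => pderiv (List.repeat false n) Dbar c y)).
  intros; symmetry; apply E. apply (HS (List.repeat false n) c t).
Qed.

Lemma mvt2 (Dbar : R -> R -> R) a c hh : smooth2 Dbar ->
  exists xi, Rabs (xi - c) <= Rabs hh /\
    Dbar a (c + hh) - Dbar a c = Derive (fun t => Dbar a t) xi * hh.
Proof.
  intros HS.
  destruct (MVT_gen (fun t => Dbar a t) c (c + hh) (fun t => Derive (fun t => Dbar a t) t))
    as [xi [Hxi E]].
  - intros t _. apply Derive_correct. apply (HS nil a t).
  - intros t _. apply continuity_pt_filterlim.
    apply (@ex_derive_continuous R_AbsRing R_NormedModule). apply (HS nil a t).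
  - exists xi. split.
    + unfold Rmin, Rmax in Hxi. destruct (Rle_dec c (c + hh)).
      rewrite Rabs_right by lra. rewrite Rabs_right by lra. lra.
      unfold Rabs. destruct (Rcase_abs (xi - c)); destruct (Rcase_abs hh); lra.
    + rewrite E. ring.
Qed.

Lemma Dprime (D : R -> R) (Dbar : R -> R -> R) c : smooth2 Dbar ->
  (forall a b, Dbar a b = Dbar b a) -> (forall v, Dbar v v = D v) ->
  is_derive D c (2 * Derive (fun t => Dbar c t) c).
Proof.
  intros HS Hsym Hdiag. apply is_derive_Reals.
  intros eps Heps.
  destruct (proj2 (proj2 (HS (cons false nil) c c)) (mkposreal (eps / 2) ltac:(lra))) as [dl Hdl].
  exists dl. intros hh Hh0 Hh.
  destruct (mvt2 Dbar (c + hh) c hh HS) as [x1 [Hx1 E1]].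
  destruct (mvt2 Dbar c c hh HS) as [x2 [Hx2 E2]].
  assert (E : D (c + hh) - D c = Derive (fun t => Dbar (c + hh) t) x1 * hh
                                 + Derive (fun t => Dbar c t) x2 * hh).
  { rewrite <- E1, <- E2, <- !Hdiag. rewrite (Hsym (c + hh) c). ring. }
  rewrite E.
  replace ((Derive (fun t => Dbar (c + hh) t) x1 * hh + Derive (fun t => Dbar c t) x2 * hh) / hh
           - 2 * Derive (fun t => Dbar c t) c)
    with ((Derive (fun t => Dbar (c + hh) t) x1 - Derive (fun t => Dbar c t) c)
          + (Derive (fun t => Dbar c t) x2 - Derive (fun t => Dbar c t) c)) by (field; auto).
  pose proof (Hdl (c + hh) x1 ltac:(replace (c + hh - c) with hh by ring; auto) ltac:(lra)) as A1.
  pose proof (Hdl c x2 ltac:(rewrite Rminus_diag, Rabs_R0; apply cond_pos) ltac:(lra)) as A2.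
  simpl in A1, A2.
  eapply Rle_lt_trans. apply Rabs_triang. lra.
Qed.

Lemma dDx_eq (u D : R -> R) (Dbar : R -> R -> R) x : smooth1 u -> smooth1 D -> smooth2 Dbar ->
  (forall a b, Dbar a b = Dbar b a) -> (forall v, Dbar v v = D v) ->
  Derive (fun t => D (u t)) x = 2 * Derive (fun t => Dbar (u x) t) (u x) * Derive u x.
Proof.
  intros Hu HD HS Hsym Hdiag.
  rewrite Derive_comp. rewrite (is_derive_unique _ _ _ (Dprime D Dbar (u x) HS Hsym Hdiag)). ring.
  exact (HD 1%nat (u x)). exact (Hu 1%nat x).
Qed.

Lemma O_sub n f g : O_ n f -> O_ n g -> O_ n (fun h => f h - g h).
Proof.
  intros Hf Hg. apply (O_ext _ (fun h => f h + (-1) * g h)). intros; ring.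
  apply O_add; auto. apply O_scal; auto.
Qed.

Lemma O_0 n : O_ n (fun _ => 0).
Proof. exists 0, 1. split. lra. intros h Hh. rewrite Rabs_R0. lra. Qed.

Lemma Bbounds (u D : R -> R) (Dbar : R -> R -> R) x : smooth1 u -> smooth2 Dbar ->
  (forall v, Dbar v v = D v) ->
  O_ 3 (fun h => Dbar (u x) (u (x + 1 * h)) - Dbar (u x) (u (x + -1 * h))
                 - h * (2 * Derive_n (fun y => Dbar (u x) y) 1 (u x) * Derive_n u 1 x)) /\
  O_ 2 (fun h => (Dbar (u x) (u (x + 1 * h)) + Dbar (u x) (u (x + -1 * h))) / 2 - D (u x)).
Proof.
  intros Hu HS Hdiag.
  set (c := u x). set (F := fun y => Dbar c y).
  set (G := fun y => F (c + y) - Tp F c 2 y).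
  assert (HG : exists M e, 0 < e /\ forall y, Rabs y < e -> Rabs (G y) <= M * Rabs y ^ 3).
  { apply (taylor_local F c 2). apply smoothF; auto. }
  set (Rr := fun s h => u (x + s * h) - Tp u x 2 (s * h)).
  assert (HR : forall s, O_ 3 (Rr s)) by (intros s; apply taylor_O; auto).
  set (dl := fun s h => u (x + s * h) - c).
  assert (Hdl : forall s, O_ 1 (dl s)).
  { intros s. apply (O_ext _ (fun h => Rr s h + ((s * Derive_n u 1 x) * h ^ 1
                                   + (s ^ 2 / 2 * Derive_n u 2 x) * h ^ 2))).
    intros h _. cbv beta. unfold Rr, dl. rewrite Tp2. unfold c. field.
    apply O_add. apply (O_weak 3); auto.
    apply O_add. apply O_pow. apply (O_weak 2). auto. apply O_pow. }
  assert (HGd : forall s, O_ 3 (fun h => G (dl s h))).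
  { intros s. apply O_comp; auto. }
  assert (Hsum : O_ 2 (fun h => dl 1 h + dl (-1) h)).
  { apply (O_ext _ (fun h => Rr 1 h + Rr (-1) h + Derive_n u 2 x * h ^ 2)).
    intros h _. cbv beta. unfold Rr, dl. rewrite !Tp2. unfold c. field.
    apply O_add. apply O_add; apply (O_weak 3); auto. apply O_pow. }
  split.
  - apply (O_ext _ (fun h => (G (dl 1 h) - G (dl (-1) h)) + Derive_n F 1 c * (Rr 1 h - Rr (-1) h)
                + Derive_n F 2 c / 2 * ((dl 1 h - dl (-1) h) * (dl 1 h + dl (-1) h)))).
    + intros h _. unfold G, Rr, dl. cbv beta. rewrite !Rplus_minus. rewrite !Tp2. unfold F, c.
      field.
    + apply O_add. apply O_add. apply O_sub; auto.
      apply O_scal. apply O_sub; auto.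
      apply O_scal. apply (O_mul 1 2). apply O_sub; auto. auto.
  - apply (O_ext _ (fun h => (G (dl 1 h) + G (dl (-1) h)) / 2 + Derive_n F 1 c / 2 * (dl 1 h + dl (-1) h)
                + Derive_n F 2 c / 4 * (dl 1 h * dl 1 h + dl (-1) h * dl (-1) h))).
    + intros h _. unfold G, Rr, dl. cbv beta. rewrite !Rplus_minus. rewrite !Tp2. unfold F, c.
      rewrite Hdiag. field.
    + apply O_add. apply O_add.
      apply (O_ext _ (fun h => / 2 * (G (dl 1 h) + G (dl (-1) h)))). intros; unfold Rdiv; ring.
      apply O_scal, (O_weak 3); auto. apply O_add; auto.
      apply O_scal; auto.
      apply O_scal. apply O_add; apply (O_mul 1 1); auto.
Qed.

Definition Jf (k k3 : R) (u : R -> R) (x : R) (j : Z) (h : R) (i : Z) :=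
  uR k k3 (gridvals u x h j) h i - uL k k3 (gridvals u x h j) h i.

Lemma Jbounds (u : R -> R) x k k3 j : smooth1 u ->
  O_ 8 (fun h => Jf k k3 u x j h j + Jf k k3 u x j h (j - 1)%Z
     - ((-1/2 + k/2 - k3/2) * Derive_n u 3 x * h ^ 3 + (-1/8 + k/8 - k3/4) * Derive_n u 5 x * h ^ 5
        + (-1/80 + k/80 - 13 * k3/240) * Derive_n u 7 x * h ^ 7)) /\
  O_ 8 (fun h => Jf k k3 u x j h j - Jf k k3 u x j h (j - 1)%Z
     - ((-1/4 + k/4 - k3/4) * Derive_n u 4 x * h ^ 4 + (-1/24 + k/24 - 5 * k3/48) * Derive_n u 6 x * h ^ 6)).
Proof.
  intros Hu.
  set (Rm := fun m h => u (x + IZR m * h) - Tp u x 7 (IZR m * h)).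
  assert (HR : forall m, O_ 8 (Rm m)) by (intros m; apply taylor_O; auto).
  split.
  - apply (O_ext _ (fun h => k3/16 * Rm (-3)%Z h + (1/4 - k/4) * Rm (-2)%Z h
        + (-1/2 + k/2 - 3*k3/16) * Rm (-1)%Z h + (1/2 - k/2 + 3*k3/16) * Rm 1%Z h
        + (-1/4 + k/4) * Rm 2%Z h + (- k3/16) * Rm 3%Z h)).
    + intros h Hh. cbv beta. unfold Jf, uR, uL, Tj, Tk, uxx, ux. gvs. unfold Rm. rewrite !Tp7. field. lra.
    + repeat first [apply HR | apply O_scal | apply O_add].
  - apply (O_ext _ (fun h => (- k3/16) * Rm (-3)%Z h + (-1/4 + k/4 + k3/8) * Rm (-2)%Z h
        + (1 - k + k3/16) * Rm (-1)%Z h + (-3/2 + 3*k/2 - k3/4) * Rm 0%Z h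
        + (1 - k + k3/16) * Rm 1%Z h
        + (-1/4 + k/4 + k3/8) * Rm 2%Z h + (- k3/16) * Rm 3%Z h)).
    + intros h Hh. cbv beta. unfold Jf, uR, uL, Tj, Tk, uxx, ux. gvs. unfold Rm. rewrite !Tp7. field. lra.
    + repeat first [apply HR | apply O_scal | apply O_add].
Qed.

Lemma assemble p (B1 B0 Jp Jm : R -> R) dd D0 a b :
  O_ 3 (fun h => B1 h - B0 h - h * dd) ->
  O_ 2 (fun h => (B1 h + B0 h) / 2 - D0) ->
  O_ (p + 2) (fun h => Jp h + Jm h - a * h ^ p) ->
  O_ (p + 3) (fun h => Jp h - Jm h - b * h ^ p * h) ->
  O_ (p + 2) (fun h => (- / 2 * B1 h * Jp h - - / 2 * B0 h * Jm h) / h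
                       - (- / 2) * (dd * a / 2 + D0 * b) * h ^ p).
Proof.
  intros HB HD HSp HSm.
  assert (HSp' : O_ p (fun h => Jp h + Jm h)).
  { apply (O_ext _ (fun h => (Jp h + Jm h - a * h ^ p) + a * h ^ p)). intros; ring.
    apply O_add. apply (O_weak (p + 2)); [lia|auto]. apply O_pow. }
  assert (HSm' : O_ (S p) (fun h => Jp h - Jm h)).
  { apply (O_ext _ (fun h => (Jp h - Jm h - b * h ^ p * h) + b * h ^ S p)). intros; simpl; ring.
    apply O_add. apply (O_weak (p + 3)); [lia|auto]. apply O_pow. }
  apply (O_ext _ (fun h => (- / 2 * (
      (B1 h - B0 h - h * dd) * (/ 2 * (Jp h + Jm h))
    + (dd * h ^ 1) * (/ 2 * (Jp h + Jm h - a * h ^ p))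
    + ((B1 h + B0 h) / 2 - D0) * (Jp h - Jm h)
    + D0 * (Jp h - Jm h - b * h ^ p * h))) / h)).
  { intros h Hh. field. lra. }
  replace (p + 2)%nat with (p + 2)%nat by reflexivity.
  apply O_div. apply O_scal.
  apply O_add; [apply O_add; [apply O_add|]|].
  - apply (O_weak (3 + p)); [lia|]. apply O_mul; auto. apply O_scal; auto.
  - apply (O_weak (1 + (p + 2))); [lia|]. apply O_mul. apply O_pow. apply O_scal; auto.
  - apply (O_weak (2 + S p)); [lia|]. apply O_mul; auto.
  - apply O_scal. apply (O_weak (p + 3)); [lia|auto].
Qed.

Lemma O_unfold n f : O_ n f ->
  exists C d : R, 0 < d /\ forall h : R, 0 < h < d -> Rabs (f h) <= C * h ^ n.
Proof. auto. Qed.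

Theorem mainTheorem1 :
  forall (u D : R -> R) (Dbar : R -> R -> R) (kappa : R),
    smooth1 u -> smooth1 D -> smooth2 Dbar ->
    (forall a b, Dbar a b = Dbar b a) ->
    (forall v, Dbar v v = D v) ->
    forall (j : Z) (x : R),
      let dDx := Derive (fun t => D (u t)) x in
      (exists C delta : R, 0 < delta /\
         forall h : R, 0 < h < delta ->
           Rabs (Eerr Dbar kappa (kappa - 1) (gridvals u x h j) h j
                 - (kappa - 1) / 32
                   * (dDx * Derive_n u 5 x + D (u x) * Derive_n u 6 x) * h ^ 5)
           <= C * h ^ 7) /\
      (exists C delta : R, 0 < delta /\
         forall h : R, 0 < h < delta ->
           Rabs (Eerr Dbar kappa 0 (gridvals u x h j) h j
                 - (- ((kappa - 1) / 8))
                   * (dDx * Derive_n u 3 x + D (u x) * Derive_n u 4 x) * h ^ 3)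
           <= C * h ^ 5).
Proof.
  intros u D Dbar kappa Hu HD HS Hsym Hdiag j x dDx.
  pose proof (dDx_eq u D Dbar x Hu HD HS Hsym Hdiag) as EdD.
  fold dDx in EdD.
  destruct (Bbounds u D Dbar x Hu HS Hdiag) as [HB1 HB2].
  set (F1 := Derive_n (fun y => Dbar (u x) y) 1 (u x)) in *.
  set (B1 := fun h => Dbar (gridvals u x h j j) (gridvals u x h j (j + 1)%Z)).
  set (B0 := fun h => Dbar (gridvals u x h j (j - 1)%Z) (gridvals u x h j (j - 1 + 1)%Z)).
  assert (EB1 : forall h, B1 h = Dbar (u x) (u (x + 1 * h))).
  { intros h. unfold B1. gvs. replace (x + 0 * h) with x by ring. reflexivity. }
  assert (EB0 : forall h, B0 h = Dbar (u x) (u (x + -1 * h))).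
  { intros h. unfold B0. gvs. replace (x + 0 * h) with x by ring. apply Hsym. }
  assert (HB1' : O_ 3 (fun h => B1 h - B0 h - h * (2 * F1 * Derive_n u 1 x))).
  { eapply O_ext; [|exact HB1]. intros h _. cbv beta. rewrite EB1, EB0. reflexivity. }
  assert (HB2' : O_ 2 (fun h => (B1 h + B0 h) / 2 - D (u x))).
  { eapply O_ext; [|exact HB2]. intros h _. cbv beta. rewrite EB1, EB0. reflexivity. }
  assert (EdD' : dDx = 2 * F1 * Derive_n u 1 x) by (rewrite EdD; reflexivity).
  split; apply O_unfold.
  - destruct (Jbounds u x kappa (kappa - 1) j Hu) as [HJ1 HJ2].
    set (Jp := fun h => Jf kappa (kappa - 1) u x j h j).
    set (Jm := fun h => Jf kappa (kappa - 1) u x j h (j - 1)%Z).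
    pose proof (assemble 5 B1 B0 Jp Jm (2 * F1 * Derive_n u 1 x) (D (u x))
                  (- ((kappa - 1) / 8) * Derive_n u 5 x) (- ((kappa - 1) / 16) * Derive_n u 6 x)
                  HB1' HB2') as HA.
    eapply O_ext; [|apply HA].
    + intros h Hh. cbv beta. unfold Eerr, Phi, Jp, Jm, Jf, B1, B0. rewrite EdD'. field. lra.
    + pose proof (O_add 7 _ _ (O_weak 8 7 _ ltac:(lia) HJ1)
        (O_pow 7 ((-1/80 + kappa/80 - 13 * (kappa - 1)/240) * Derive_n u 7 x))) as H7.
      eapply O_ext; [|exact H7]. intros h _. cbv beta. unfold Jp, Jm. field.
    + eapply O_ext; [|exact HJ2]. intros h _. cbv beta. unfold Jp, Jm. field.
  - destruct (Jbounds u x kappa 0 j Hu) as [HJ1 HJ2].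
    set (Jp := fun h => Jf kappa 0 u x j h j).
    set (Jm := fun h => Jf kappa 0 u x j h (j - 1)%Z).
    pose proof (assemble 3 B1 B0 Jp Jm (2 * F1 * Derive_n u 1 x) (D (u x))
                  ((kappa - 1) / 2 * Derive_n u 3 x) ((kappa - 1) / 4 * Derive_n u 4 x)
                  HB1' HB2') as HA.
    eapply O_ext; [|apply HA].
    + intros h Hh. cbv beta. unfold Eerr, Phi, Jp, Jm, Jf, B1, B0. rewrite EdD'. field. lra.
    + pose proof (O_add 5 _ _ (O_weak 8 5 _ ltac:(lia) HJ1)
        (O_add 5 _ _ (O_pow 5 ((-1/8 + kappa/8 - 0/4) * Derive_n u 5 x))
           (O_weak 7 5 _ ltac:(lia) (O_pow 7 ((-1/80 + kappa/80 - 13 * 0/240) * Derive_n u 7 x))))) as H5.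
      eapply O_ext; [|exact H5]. intros h _. cbv beta. unfold Jp, Jm. field.
    + pose proof (O_add 6 _ _ (O_weak 8 6 _ ltac:(lia) HJ2)
        (O_pow 6 ((-1/24 + kappa/24 - 5 * 0/48) * Derive_n u 6 x))) as H6.
      eapply O_ext; [|exact H6]. intros h _. cbv beta. unfold Jp, Jm. field.
Qed.
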